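(* Let $\Sigma=(\mathcal{U},\mathcal{S})$ be a set system with $m=|\mathcal{U}|$, and let $\mathcal{C}^{*}$ be a minimum-size set cover of $\Sigma$. If a set-cover solution $\mathcal{C}\subseteq\mathcal{S}$ of $\Sigma$ (together with an assignment $\phi$) is stable, then $|\mathcal{C}| \leq O(\log m)\cdot|\mathcal{C}^{*}|$.
   Context: A set system $\Sigma=(\mathcal{U},\mathcal{S})$ consists of a finite universe $\mathcal{U}$ and a finite collection $\mathcal{S}$ of subsets of $\mathcal{U}$; a set-cover solution is a subcollection $\mathcal{C}\subseteq\mathcal{S}$ with $\bigcup_{S\in\mathcal{C}}S=\mathcal{U}$. For a set-cover solution $\mathcal{C}$, an assignment is a map $\phi:\mathcal{U}\to\mathcal{C}$ with $u\in\phi(u)$ for every $u$. For $S\in\mathcal{C}$, its cover set is $\mathtt{cov}(S)=\{u\in\mathcal{U}:\phi(u)=S\}$ (so cover sets of distinct sets are disjoint). The sets of $\mathcal{C}$ are organized into levels $\mathcal{L}_j$, $j\in\mathbb{N}=\{0,1,2,\dots\}$, each set of $\mathcal{C}$ lying in exactly one level, and $A_j=\{u\in\mathcal{U}:\phi(u)\in\mathcal{L}_j\}$. The solution $\mathcal{C}$ is stable if (1) for each $j$ and each $S\in\mathcal{L}_j$, $2^{j}\leq|\mathtt{cov}(S)|<2^{j+1}$; and (2) for each level $\mathcal{L}_j$, there is no $S\in\mathcal{S}$ with $|S\cap A_j|\geq 2^{j+1}$. *)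

(* Defs.v *)
From mathcomp Require Import all_boot.
Set Implicit Arguments. Unset Strict Implicit. Unset Printing Implicit Defensive.

Section SetCover.
Variable U : finType.

Definition is_set_cover (S C : {set {set U}}) : Prop :=
  C \subset S /\ \bigcup_(X in C) X = [set: U].

Definition is_min_set_cover (S Cstar : {set {set U}}) : Prop :=
  is_set_cover S Cstar /\
  forall C : {set {set U}}, is_set_cover S C -> #|Cstar| <= #|C|.

Definition is_assignment (C : {set {set U}}) (phi : U -> {set U}) : Prop :=
  forall u : U, phi u \in C /\ u \in phi u.

Definition cov (phi : U -> {set U}) (X : {set U}) : {set U} :=
  [set u | phi u == X].

Definition Alev (phi : U -> {set U}) (lev : {set U} -> nat) (j : nat) : {set U} :=
  [set u | lev (phi u) == j].

Definition stable (S C : {set {set U}}) (phi : U -> {set U})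
    (lev : {set U} -> nat) : Prop :=
  (forall X, X \in C -> 2 ^ lev X <= #|cov phi X| < 2 ^ (lev X).+1) /\
  (forall (j : nat) (X : {set U}), X \in S -> #|X :&: Alev phi lev j| < 2 ^ j.+1).

End SetCover.

(* Main.v *)
Require Import Defs.
From mathcomp Require Import all_boot.
From mathcomp Require Import zify.

Lemma card_bigcup_le (T : finType) (I : Type) (r : seq I) (P : pred I) (F : I -> {set T}) :
  #|\bigcup_(i <- r | P i) F i| <= \sum_(i <- r | P i) #|F i|.
Proof.
apply: (big_ind2 (fun (A : {set T}) n => #|A| <= n)); first by rewrite cards0.
  move=> A n B m HA HB; apply: leq_trans (leq_card_setU A B) _; exact: leq_add.
by [].
Qed.

Section Lev.
Variable U : finType.
Variables (S C Cstar : {set {set U}}) (phi : U -> {set U}) (lev : {set U} -> nat).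
Hypothesis HC : is_set_cover S C.
Hypothesis Hphi : is_assignment C phi.
Hypothesis Hst : stable S C phi lev.
Hypothesis Hmin : is_min_set_cover S Cstar.

Lemma level_bound j : #|[set X in C | lev X == j]| <= 2 * #|Cstar|.
Proof.
set Cj := [set X in C | lev X == j].
set Aj := Alev phi lev j.
have H1 : 2 ^ j * #|Cj| <= #|Aj|.
  have -> : 2 ^ j * #|Cj| = \sum_(X in Cj) 2 ^ j by rewrite sum_nat_const mulnC.
  apply: (@leq_trans (\sum_(X in Cj) #|cov phi X|)).
    apply: leq_sum => X; rewrite inE => /andP [XC /eqP <-].
    by case: Hst => /(_ X XC) /andP [].
  apply: (@leq_trans #|[pred u | phi u \in Cj]|); last first.
    apply: subset_leq_card; apply/subsetP => u; rewrite !inE; by case/andP.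
  rewrite -sum1_card (partition_big phi (fun X => X \in Cj)) //=.
  apply: leq_sum => X XC; rewrite -sum1_card; apply: eq_leq; apply: eq_bigl => u.
  rewrite /cov inE; case E: (phi u == X); rewrite ?andbF ?andbT //; by rewrite inE /= (eqP E) XC.
have H2 : #|Aj| <= #|Cstar| * 2 ^ j.+1.
  case: Hmin => [[CsS CsU] _].
  apply: (@leq_trans #|\bigcup_(Y in Cstar) (Y :&: Aj)|).
    apply: subset_leq_card; apply/subsetP => v vA.
    have : v \in \bigcup_(X in Cstar) X by rewrite CsU inE.
    case/bigcupP => Y YC vY; apply/bigcupP; exists Y => //; by rewrite inE vY vA.
  apply: leq_trans (card_bigcup_le _ _ _ _ _) _.
  rewrite -sum_nat_const; apply: leq_sum => Y YC.
  apply: ltnW; case: Hst => _; apply; exact: (subsetP CsS).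
have H := leq_trans H1 H2.
rewrite -(leq_pmul2l (expn_gt0 2 j)); apply: leq_trans H _; rewrite expnS; apply: eq_leq; lia.
Qed.

Lemma lev_le X : X \in C -> lev X <= trunc_log 2 #|U|.
Proof.
move=> XC; apply: trunc_log_max => //.
case: Hst => /(_ X XC) /andP [H _] _; apply: leq_trans H _; exact: max_card.
Qed.

Lemma main_bound : #|C| <= 2 * (trunc_log 2 #|U|).+1 * #|Cstar|.
Proof.
set L := trunc_log 2 #|U|.
rewrite -sum1_card (partition_big (fun X => @inord L (lev X)) predT) //=.
apply: (@leq_trans (\sum_(j < L.+1) 2 * #|Cstar|)); last first.
  by rewrite sum_nat_const card_ord mulnA [L.+1 * 2]mulnC.
apply: leq_sum => j _; rewrite sum1_card.
apply: leq_trans (level_bound j); apply: subset_leq_card; apply/subsetP => X.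
rewrite !inE => /andP [XC /eqP <-]; rewrite XC /= inordK //; exact: lev_le.
Qed.
End Lev.

(* |C| <= O(log m) * |C*|, with log m read as (trunc_log 2 m) + 1 so that
   the bound is meaningful also for m = 1. The constant c is universal. *)
Theorem theorem1 :
  exists c : nat,
  forall (U : finType) (S C Cstar : {set {set U}})
         (phi : U -> {set U}) (lev : {set U} -> nat),
    is_set_cover S C ->
    is_assignment C phi ->
    stable S C phi lev ->
    is_min_set_cover S Cstar ->
    #|C| <= c * (trunc_log 2 #|U|).+1 * #|Cstar|.
Proof.
exists 2 => U S C Cstar phi lev _ _ Hst Hmin; exact: main_bound Hst Hmin.
Qed.
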